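(* Let $f(x)=\kappa_1(x)_++\kappa_2(x)_-$ with $\kappa_2>\kappa_1>0$, where $(x)_+=\max(0,x)$ and $(x)_-=\min(0,x)$. For $d_t>0$, a state $s$, a scaled stock $c\in\mathbb{R}$, and a random future return $G_t(s,c)$ (integrable), define $V_t(s,c)\doteq\frac{1}{d_t}\Big(f^{-1}\big(\mathbb{E}[f(d_tc+d_tG_t(s,c))]\big)-d_tc\Big)$, and let $\Lambda=\frac{\kappa_2-\kappa_1}{\kappa_1}>0$. Then $V_t(s,c)\ge\mathbb{E}[G_t(s,c)]-\Lambda\,\mathbb{E}\big[|(c+G_t(s,c))_-|\big]$.
   Context: $f^{-1}$ denotes the inverse of the strictly increasing bijection $f:\mathbb{R}\to\mathbb{R}$. *)

(* Defs.v *)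
From HB Require Import structures.
From mathcomp Require Import all_boot all_order all_algebra.
From mathcomp Require Import all_classical all_reals all_analysis.
Set Implicit Arguments. Unset Strict Implicit. Unset Printing Implicit Defensive.
Import Order.TTheory GRing.Theory Num.Theory.
Local Open Scope ring_scope.

Definition pospart {R : realType} (x : R) : R := Num.max 0 x.
Definition negpart {R : realType} (x : R) : R := Num.min 0 x.

Definition futil {R : realType} (k1 k2 : R) (x : R) : R :=
  k1 * pospart x + k2 * negpart x.

(* Main.v *)
Require Import Defs.
From HB Require Import structures.
From mathcomp Require Import all_boot all_order all_algebra.
From mathcomp Require Import ring lra.
From mathcomp Require Import all_classical all_reals all_analysis.
Import Order.TTheory GRing.Theory Num.Theory.
Local Open Scope ring_scope.

Lemma negpartE {R : realType} (x : R) : negpart x = (x - `|x|) / 2.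
Proof.
rewrite /negpart; case: (lerP 0 x) => h.
  by rewrite (ger0_norm h) subrr mul0r.
by rewrite (ltr0_norm h); field.
Qed.

Lemma posneg {R : realType} (x : R) : pospart x = x - negpart x.
Proof.
rewrite /pospart /negpart; case: (lerP 0 x) => h.
  by rewrite subr0.
by rewrite subrr.
Qed.

Lemma futil_le {R : realType} (k1 k2 x : R) : k1 <= k2 -> futil k1 k2 x <= k1 * x.
Proof.
move=> hk; rewrite /futil posneg.
have : negpart x <= 0 by rewrite /negpart ge_min lexx.
move=> hn.
have : 0 <= (k2 - k1) * (- negpart x) by apply: mulr_ge0; lra.
lra.
Qed.

Theorem mainTheorem6 (R : realType) (d : measure_display) (T : measurableType d)
  (P : probability T R) (k1 k2 : R) (finv : R -> R) (dt c : R) (G : T -> R) :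
  0 < k1 -> k1 < k2 ->
  cancel (futil k1 k2) finv -> cancel finv (futil k1 k2) ->
  0 < dt ->
  P.-integrable setT (EFin \o G) ->
  let V := (finv (fine ('E_P[fun w => futil k1 k2 (dt * c + dt * G w)])) - dt * c) / dt in
  let Lambda := (k2 - k1) / k1 in
  ('E_P[G] - Lambda%:E * 'E_P[fun w => `|negpart (c + G w)|%R] <= V%:E)%E.
Proof.
intros k1p k12 fK finvK dtp iG; cbv zeta.
have LG : G \in Lfun P 1 by apply/Lfun1_integrable.
have Lc : forall r : R, cst r \in Lfun P 1 by move=> r; exact: Lfun_cst.
pose g := cst c \+ G.
have Lg : g \in Lfun P 1 by rewrite /g rpredD.
pose ag := Num.norm \o g.
have Lag : ag \in Lfun P 1 by exact: Lfun_norm.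
have ga := expectation_fin_num Lg.
have gb := expectation_fin_num Lag.
set a := fine 'E_P[g] in ga.
set b := fine 'E_P[ag] in gb.
have Ea : ('E_P[g] = a%:E)%E by rewrite fineK.
have Eb : ('E_P[ag] = b%:E)%E by rewrite fineK.
have -> : G = g \- cst c.
  by apply: boolp.funext => w /=; rewrite /g /=; ring.
rewrite expectationB // Ea expectation_cst.
have -> : (fun w => `|negpart (c + (g \- cst c) w)|) = (1/2) \o* (ag \- g).
  apply: boolp.funext => w /=; rewrite /ag /= addrC subrK.
  rewrite negpartE.
  have := normr_ge0 (g w); have := ler_norm (g w).
  move=> h1 h2; rewrite ler0_norm; first by field.
  rewrite mulr_le0_ge0 //; lra.
rewrite expectationZl ?rpredB // expectationB // Ea Eb.
have -> : (fun w => futil k1 k2 (dt * c + dt * (g \- cst c) w)) =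
   (dt * k1 + dt * (k2 - k1) / 2) \o* g \+ (- (dt * (k2 - k1) / 2)) \o* ag.
  apply: boolp.funext => w /=; rewrite /ag /=.
  rewrite /futil posneg negpartE.
  have -> : dt * c + dt * (g w - c) = dt * g w by ring.
  rewrite normrM (gtr0_norm dtp); ring.
rewrite expectationD; [|exact: Lfun_scale|exact: Lfun_scale]. rewrite !expectationZl // Ea Eb /=.

rewrite -!EFinD lee_fin.
set y := (_ * a + _ * b).
have hy : y <= k1 * finv y by rewrite -{1}(finvK y); exact: futil_le (ltW k12).
have h : y / k1 <= finv y by rewrite ler_pdivrMr // mulrC.
rewrite ler_pdivlMr //.
have e : y / k1 = (a - c - (k2 - k1) / k1 * (1 / 2 * (b - a))) * dt + dt * c.
  by rewrite /y; field; rewrite gt_eqF.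
move: h; rewrite e; clearbody y; clear.
move=> h; rewrite lerBrDr; exact: h.
Qed.
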